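(* The Borda SCC and the Copeland SCC are both immune to the reversal bias of type 3; that is, for $C\in\{Bor,Cop\}$ and every $p\in\mathcal P$, if $C(p)\cap C(p^r)\neq\varnothing$ then $C(p)=N$.
   Context: Let $n,h\ge2$, $N=\{1,\dots,n\}$, $H=\{1,\dots,h\}$. A preference profile is an $h$-tuple $p$ of linear orders on $N$; $\mathcal P$ is the set of profiles; $p^r$ is obtained by reversing each order; $\mathrm{rank}_{p_i}(x)=|\{y: y>_{p_i}x\}|+1$. Let $\mu_0=\lceil (h+1)/2\rceil$, and write $x>^p_{\mu_0}y$ if $|\{i\in H: x>_{p_i}y\}|\ge\mu_0$. The Borda SCC is $Bor(p)=\mathrm{argmax}_{x\in N}\sum_{i=1}^h(n-\mathrm{rank}_{p_i}(x))$; the Copeland SCC is $Cop(p)=\mathrm{argmax}_{x\in N}\big(|\{y: x>^p_{\mu_0}y\}|-|\{y: y>^p_{\mu_0}x\}|\big)$. An SCC $C$ suffers the reversal bias of type 3 if there exists $p$ with $|C(p)|<n$ and $C(p)\cap C(p^r)\ne\varnothing$. *)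

(* Defs.v *)
From mathcomp Require Import all_boot all_algebra.
Set Implicit Arguments. Unset Strict Implicit. Unset Printing Implicit Defensive.

(* Alternatives N = 'I_n, voters H = 'I_h.  A linear order on N is a strict
   total order, given as a boolean relation: [r x y] means "x is ranked above y". *)
Definition linear_order (n : nat) (r : rel 'I_n) : Prop :=
  [/\ irreflexive r, transitive r & forall x y, x != y -> r x y || r y x].

Definition profile (n h : nat) := 'I_h -> rel 'I_n.

Definition is_profile (n h : nat) (p : profile n h) : Prop :=
  forall i, linear_order (p i).

Definition rev_profile (n h : nat) (p : profile n h) : profile n h :=
  fun i x y => p i y x.

Definition rank (n : nat) (r : rel 'I_n) (x : 'I_n) : nat :=
  #|[set y | r y x]|.+1.

Definition borda_score (n h : nat) (p : profile n h) (x : 'I_n) : nat :=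
  \sum_(i < h) (n - rank (p i) x).

Definition Bor (n h : nat) (p : profile n h) : {set 'I_n} :=
  [set x | [forall y, borda_score p y <= borda_score p x]].

Definition mu0 (h : nat) : nat := uphalf h.+1.

Definition maj (n h : nat) (p : profile n h) (x y : 'I_n) : bool :=
  mu0 h <= #|[set i | p i x y]|.

Definition copeland_score (n h : nat) (p : profile n h) (x : 'I_n) : int :=
  (#|[set y | maj p x y]|%:Z - #|[set y | maj p y x]|%:Z)%R.

Definition Cop (n h : nat) (p : profile n h) : {set 'I_n} :=
  [set x | [forall y, (copeland_score p y <= copeland_score p x)%R]].

(* Main.v *)
Require Import Defs.
From mathcomp Require Import all_boot all_algebra.
From mathcomp Require Import all_order zify.
Import Order.TTheory GRing.Theory Num.Theory.

Lemma card_lo (n : nat) (r : rel 'I_n) (x : 'I_n) : linear_order r ->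
  #|[set y | r y x]| + #|[set y | r x y]| = n.-1.
Proof.
move=> [irr tr tot].
rewrite -cardsUI.
have -> : [set y | r y x] :&: [set y | r x y] = set0.
  apply/setP=> y; rewrite !inE; apply/negbTE/andP=> [[a b]].
  by have := tr _ _ _ b a; rewrite irr.
have -> : [set y | r y x] :|: [set y | r x y] = [set~ x].
  apply/setP=> y; rewrite !inE.
  case: (eqVneq y x) => [->|ne]; first by rewrite irr.
  by rewrite orbC tot // eq_sym.
by rewrite cards0 addn0 cardsC1 card_ord.
Qed.

Lemma borda_sum (n h : nat) (p : profile n h) (x : 'I_n) : is_profile p ->
  borda_score p x + borda_score (rev_profile p) x = h * n.-1.
Proof.
move=> hp; rewrite /borda_score -big_split /=.
rewrite (eq_bigr (fun _ => n.-1)); last first.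
  move=> i _; have := @card_lo n (p i) x (hp i); rewrite /rank /rev_profile.
  have : 0 < n by case: x => [m]; lia.
  lia.
by rewrite sum_nat_const card_ord.
Qed.

Lemma cop_rev (n h : nat) (p : profile n h) (x : 'I_n) :
  copeland_score (rev_profile p) x = (- copeland_score p x)%R.
Proof.
by rewrite /copeland_score /maj /rev_profile opprB.
Qed.

Theorem proposition2 (n h : nat) (hn : 2 <= n) (hh : 2 <= h) :
  (forall p : profile n h, is_profile p ->
     Bor p :&: Bor (rev_profile p) != set0 -> Bor p = [set: 'I_n]) /\
  (forall p : profile n h, is_profile p ->
     Cop p :&: Cop (rev_profile p) != set0 -> Cop p = [set: 'I_n]).
Proof.
split=> p hp /set0Pn [x]; rewrite inE => /andP [].
- rewrite !inE => /forallP H1 /forallP H2.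
  have E : forall y, borda_score p y = borda_score p x.
    move=> y; apply/eqP; rewrite eqn_leq H1 /=.
    rewrite -(leq_add2r (borda_score (rev_profile p) x)) (@borda_sum n h p x hp).
    rewrite -(@borda_sum n h p y hp) leq_add2l; exact: H2.
  apply/setP=> z; rewrite !inE; apply/forallP=> y; by rewrite E (E z).
- rewrite !inE => /forallP H1 /forallP H2.
  have E : forall y, copeland_score p y = copeland_score p x.
    move=> y.
    have a := H1 y.
    have b := H2 y.
    rewrite (@cop_rev n h p y) (@cop_rev n h p x) lerN2 in b.
    by apply: le_anti; rewrite a b.
  apply/setP=> z; rewrite !inE; apply/forallP=> y; by rewrite E (E z).
Qed.
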